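(* Let $\mathbb{F}\in\{\mathbb{R},\mathbb{C}\}$. If $S\in\mathsf{GL}_m(\mathbb{F})$ and $T\in\mathsf{GL}_n(\mathbb{F})$ are ideal, then $S\otimes T$ is ideal.
   Context: For $x\in\mathbb{F}^n$, $D_x$ is the diagonal matrix with $(i,i)$-entry $x_i$; $M\ge0$ means every entry of $M$ is a nonnegative real number. For $S\in\mathsf{GL}_n(\mathbb{F})$, $\mathcal{C}(S)=\{x\in\mathbb{F}^n\mid SD_xS^{-1}\ge 0\}$, and $\mathcal{C}_r(S)$ denotes the conical hull (set of nonnegative real linear combinations) of the rows of $S$, viewed as vectors in $\mathbb{F}^n$. An invertible $S$ is a Perron similarity if for some $i$ the column $Se_i$ and the row $e_i^\top S^{-1}$ are both entrywise nonnegative or both entrywise nonpositive (real). A Perron similarity $S$ is called ideal if $\mathcal{C}(S)=\mathcal{C}_r(S)$. $\otimes$ is the Kronecker product. *)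

(* Defs.v *)
From HB Require Import structures.
From mathcomp Require Import all_boot all_order all_algebra.
From mathcomp Require Import reals.
From mathcomp Require Export mxtens complex.
Set Implicit Arguments. Unset Strict Implicit. Unset Printing Implicit Defensive.
Import Order.TTheory GRing.Theory Num.Theory.
Local Open Scope ring_scope.

(* For F : numFieldType, [0 <= z] means z is a nonnegative real number
   (for F = complex R: Im z = 0 and Re z >= 0). *)

Definition nonneg_mx (F : numFieldType) m n (M : 'M[F]_(m, n)) : Prop :=
  forall i j, 0 <= M i j.

Definition Dmx (F : numFieldType) n (x : 'rV[F]_n) : 'M[F]_n := diag_mx x.

Definition Ccone (F : numFieldType) n (S : 'M[F]_n) (x : 'rV[F]_n) : Prop :=
  nonneg_mx (S *m Dmx x *m invmx S).

Definition Crcone (F : numFieldType) n (S : 'M[F]_n) (x : 'rV[F]_n) : Prop :=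
  exists c : 'rV[F]_n, (forall j, 0 <= c 0 j) /\ x = c *m S.

Definition perron_similarity (F : numFieldType) n (S : 'M[F]_n) : Prop :=
  S \in unitmx /\
  exists i : 'I_n,
    ((forall j, 0 <= S j i) /\ (forall j, 0 <= invmx S i j)) \/
    ((forall j, S j i <= 0) /\ (forall j, invmx S i j <= 0)).

Definition ideal (F : numFieldType) n (S : 'M[F]_n) : Prop :=
  perron_similarity S /\ forall x, Ccone S x <-> Crcone S x.

(* Main.v *)
Require Import Defs.
From mathcomp Require Import all_boot all_order all_algebra.
From mathcomp Require Import reals.
From mathcomp Require Import mxtens complex.
From mathcomp Require Import ring.
Import Order.TTheory GRing.Theory Num.Theory.
Local Open Scope ring_scope.

Section Gen.
Variable F : numFieldType.
Local Set Implicit Arguments.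
Local Unset Strict Implicit.
Local Notation idx := (@mxtens_index _ _).

Lemma sum_tens m n (G : 'I_(m*n) -> F) :
  \sum_k G k = \sum_(i < m) \sum_(j < n) G (idx (i, j)).
Proof.
rewrite pair_big (reindex (@mxtens_index m n)) /=; last first.
  by exists (@mxtens_unindex m n) => x _; rewrite (mxtens_indexK, mxtens_unindexK).
by apply: eq_bigr => -[i j].
Qed.

Lemma tens_diag_entry m n (A C : 'M[F]_m) (B D : 'M[F]_n) (z : 'rV[F]_(m*n)) a r b q :
  ((A *t B) *m diag_mx z *m (C *t D)) (idx (a, r)) (idx (b, q)) =
  \sum_j \sum_l A a j * B r l * z 0 (idx (j, l)) * C j b * D l q.
Proof.
rewrite mxE sum_tens; apply: eq_bigr => j _; apply: eq_bigr => l _.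
by rewrite mul_mx_diag !mxE !mxtens_indexK /= !mulrA.
Qed.

Lemma tens_row_entry m n (C : 'M[F]_m) (D : 'M[F]_n) (z : 'rV[F]_(m*n)) i k :
  (z *m (C *t D)) 0 (idx (i, k)) =
  \sum_j \sum_l z 0 (idx (j, l)) * C j i * D l k.
Proof.
rewrite mxE sum_tens; apply: eq_bigr => j _; apply: eq_bigr => l _.
by rewrite tensmxE mulrA.
Qed.

Lemma diag_entry n (A C : 'M[F]_n) (x : 'rV[F]_n) a b :
  (A *m diag_mx x *m C) a b = \sum_j A a j * x 0 j * C j b.
Proof. rewrite mxE; apply: eq_bigr => j _; by rewrite mul_mx_diag mxE. Qed.

Lemma tens1 m n : (1%:M : 'M[F]_m) *t (1%:M : 'M[F]_n) = 1%:M.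
Proof.
apply/matrixP => i j.
case: (@mxtens_indexP m n i) => i1 i2; case: (@mxtens_indexP m n j) => j1 j2.
rewrite tensmxE !mxE.
have -> : (idx (i1, i2) == idx (j1, j2)) = ((i1, i2) == (j1, j2)).
  by apply/eqP/eqP => [/(congr1 (@mxtens_unindex m n)) | ->]; rewrite ?mxtens_indexK.
by rewrite xpair_eqE; case: (i1 == j1); case: (i2 == j2); rewrite ?mulr1 ?mulr0 ?mul0r.
Qed.

Lemma tens_inv m n (S : 'M[F]_m) (T : 'M[F]_n) :
  S \in unitmx -> T \in unitmx ->
  (S *t T) \in unitmx /\ invmx (S *t T) = invmx S *t invmx T.
Proof.
move=> uS uT.
have h : (S *t T) *m (invmx S *t invmx T) = 1%:M.
  by rewrite tensmx_mul !mulmxV // tens1.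
have u := (mulmx1_unit h).1; split => //.
by rewrite -[invmx _]mulmx1 -h mulKmx.
Qed.

Lemma cone_char n (S : 'M[F]_n) : S \in unitmx ->
  forall x, Crcone S x <-> (forall j, 0 <= (x *m invmx S) 0 j).
Proof.
move=> uS x; split.
  by case=> c [hc ->] j; rewrite mulmxK.
by move=> h; exists (x *m invmx S); split => //; rewrite mulmxKV.
Qed.

Lemma row_in_C n (S : 'M[F]_n) : (forall x, Ccone S x <-> Crcone S x) ->
  forall i a b, 0 <= \sum_j S a j * S i j * invmx S j b.
Proof.
move=> H i a b.
have : Ccone S (row i S).
  apply/H; exists (delta_mx 0 i); split; last by rewrite -rowE.
  by move=> j; rewrite mxE ler0n.
move=> /(_ a b); rewrite /Dmx diag_entry.
by under eq_bigr do rewrite mxE.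
Qed.


Lemma tens_ideal m n (S : 'M[F]_m) (T : 'M[F]_n) :
  S \in unitmx -> T \in unitmx -> ideal S -> ideal T -> ideal (S *t T).
Proof.
move=> uS uT [[_ [i hi]] HS] [[_ [k hk]] HT].
have [uST invE] := tens_inv uS uT.
split.
  split => //; exists (idx (i, k)); rewrite invE.
  case: hi => [[c1 r1]|[c1 r1]]; case: hk => [[c2 r2]|[c2 r2]];
    [left|right|right|left]; split => J; case: (@mxtens_indexP m n J) => j l;
    rewrite tensmxE;
    first [ (apply: mulr_ge0; by [apply: c1|apply: c2|apply: r1|apply: r2])
          | (apply: mulr_ge0_le0; by [apply: c1|apply: c2|apply: r1|apply: r2])
          | (apply: mulr_le0_ge0; by [apply: c1|apply: c2|apply: r1|apply: r2])
          | (apply: mulr_le0; by [apply: c1|apply: c2|apply: r1|apply: r2]) ].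
move=> z; rewrite cone_char //; split.
  move=> HM K; rewrite invE; case: (@mxtens_indexP m n K) => i0 k0.
  rewrite tens_row_entry.
  pose y := \row_l \sum_j z 0 (idx (j, l)) * invmx S j i0.
  have Cy : Ccone T y.
    move=> r q; rewrite /Dmx diag_entry.
    pose x := \row_j \sum_l T r l * z 0 (idx (j, l)) * invmx T l q.
    have Cx : Ccone S x.
      move=> a b; have := HM (idx (a, r)) (idx (b, q)).
      rewrite /Dmx invE tens_diag_entry diag_entry.
      suff -> : \sum_j S a j * x 0 j * invmx S j b =
        \sum_j \sum_l S a j * T r l * z 0 (idx (j, l)) * invmx S j b * invmx T l q by [].
      apply: eq_bigr => j _; rewrite mxE mulr_sumr mulr_suml.
      by apply: eq_bigr => l _; ring.
    have := (cone_char uS x).1 ((HS x).1 Cx) i0; rewrite mxE.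
    suff -> : \sum_j x 0 j * invmx S j i0 = \sum_l T r l * y 0 l * invmx T l q by [].
    transitivity (\sum_j \sum_l T r l * z 0 (idx (j, l)) * invmx T l q * invmx S j i0).
      by apply: eq_bigr => j _; rewrite mxE mulr_suml.
    rewrite exchange_big; apply: eq_bigr => l _.
    rewrite mxE mulr_sumr mulr_suml; apply: eq_bigr => j _; ring.
  have := (cone_char uT y).1 ((HT y).1 Cy) k0; rewrite mxE.
  suff -> : \sum_l y 0 l * invmx T l k0 =
    \sum_j \sum_l z 0 (idx (j, l)) * invmx S j i0 * invmx T l k0 by [].
  rewrite exchange_big; apply: eq_bigr => l _.
  rewrite mxE mulr_suml; apply: eq_bigr => j _; ring.
move=> hc0.
have zE : z = (z *m invmx (S *t T)) *m (S *t T) by rewrite mulmxKV.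
move: (z *m invmx (S *t T)) hc0 zE => c hc ->.
move=> A B; case: (@mxtens_indexP m n A) => a r; case: (@mxtens_indexP m n B) => b q.
rewrite /Dmx invE tens_diag_entry.
pose E (j i : 'I_m) (l k : 'I_n) := c 0 (idx (i, k)) * (S a j * S i j * invmx S j b) *
   (T r l * T k l * invmx T l q).
set L := (X in 0 <= X).
have -> : L = (\sum_(i0 < m) \sum_(k0 < n) c 0 (idx (i0, k0)) *
   (\sum_j S a j * S i0 j * invmx S j b) * (\sum_l T r l * T k0 l * invmx T l q)).
  rewrite /L.
  transitivity (\sum_(j < m) \sum_(l < n) \sum_(i < m) \sum_(k < n) E j i l k).
    apply: eq_bigr => j _; apply: eq_bigr => l _; rewrite tens_row_entry.
    transitivity ((\sum_(i0 < m) \sum_(k0 < n) c 0 (idx (i0, k0)) * S i0 j * T k0 l) *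
        (S a j * T r l * invmx S j b * invmx T l q)); first by ring.
    rewrite mulr_suml; apply: eq_bigr => i0 _; rewrite mulr_suml.
    by apply: eq_bigr => k0 _; rewrite /E; ring.
  under eq_bigr => j _ do rewrite exchange_big.
  under eq_bigr => j _ do under eq_bigr => i0 _ do rewrite exchange_big.
  rewrite exchange_big.
  under eq_bigr => i0 _ do rewrite exchange_big.
  apply: eq_bigr => i0 _; apply: eq_bigr => k0 _.
  symmetry; rewrite -mulrA big_distrlr mulr_sumr; apply: eq_bigr => j _.
  rewrite mulr_sumr; apply: eq_bigr => l _; by rewrite /E /= mulrA.
apply: sumr_ge0 => i0 _; apply: sumr_ge0 => k0 _.
apply: mulr_ge0; first apply: mulr_ge0.
- exact: hc.
- exact: row_in_C.
- exact: row_in_C.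
Qed.

End Gen.

Theorem theorem5p1 (R : realType) :
  (forall (m n : nat) (S : 'M[R]_m) (T : 'M[R]_n),
      S \in unitmx -> T \in unitmx -> ideal S -> ideal T -> ideal (S *t T)) /\
  (forall (m n : nat) (S : 'M[R[i]]_m) (T : 'M[R[i]]_n),
      S \in unitmx -> T \in unitmx -> ideal S -> ideal T -> ideal (S *t T)).
Proof. by split => m n S T; apply: tens_ideal. Qed.
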